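(* The representation $\rho$ in the following setting is reducible if and only if $w\ne2$. Setting: $q$ a root of unity with $n$ even and $q^4\ne1$ ($N=n/2$); $k\in\mathbb Z$, $w=-q^{4k+2}-q^{-4k-2}$; $V$ has basis $\{u_i:-N\le i\le N-1\}$, $u_N:=0$; $\lambda_i=q^{2i}+q^{-2i}$, and for $i\ne-N,0$: $s_i=\frac{q^{2i-2k}-q^{-2i+2k}}{q^{2i}-q^{-2i}}$, $s'_i=\frac{q^{2i+2}-q^{-2i-2}}{q^{2i}-q^{-2i}}s_i$, $\beta_i=\frac{q^{2k}-q^{-2k}}{(q^{2i}-q^{-2i})^3}$; $\rho$ is the representation of $\mathcal S_q(\Sigma_{1,1})$ with $\rho(\alpha_0)u_i=\lambda_iu_i$ ($-N\le i\le0$), $\rho(\alpha_0)u_i=\lambda_iu_i+u_{-i}$ ($0<i<N$), $\rho(\alpha_\infty)u_{-N}=(q^{2k}+q^{-2k})u_{-N+1}+(q^2-q^{-2})(q^{2k}-q^{-2k})u_{N-1}$, $\rho(\alpha_\infty)u_i=s_iu_{i+1}+s_{-i}u_{i-1}$ ($-N<i<0$), $\rho(\alpha_\infty)u_0=(q^{2k}+q^{-2k})u_{-1}-(q^2-q^{-2})(q^{2k}-q^{-2k})u_1$, $\rho(\alpha_\infty)u_i=\beta_iu_{-i-1}-\beta_iu_{-i+1}+s'_{-i}u_{i-1}+s'_iu_{i+1}$ ($0<i<N$).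
   Context: $\mathcal S_q(\Sigma_{1,1})$ is the Kauffman bracket skein algebra of the one-punctured torus, generated by the slope $0,1,\infty$ curves $\alpha_0,\alpha_1,\alpha_\infty$; for $q^4\ne1$ a representation is determined by the images of $\alpha_0,\alpha_\infty$. For $q$ a root of unity, $n=\mathrm{ord}(q^2)$, $N=\mathrm{ord}(q^4)$. (The formulas above are known to define a representation.) *)

(* Defs.v *)
From HB Require Import structures.
From mathcomp Require Import all_boot all_order all_algebra all_field.
Set Implicit Arguments. Unset Strict Implicit. Unset Printing Implicit Defensive.
Import Order.TTheory GRing.Theory Num.Theory.
Local Open Scope ring_scope.

Section Rho.
Variables (q : algC) (k : int) (N : nat).

(* index i : 'I_(2N) corresponds to the integer i - N in [-N, N-1] *)
Definition idx (i : 'I_(N.*2)) : int := (nat_of_ord i)%:Z - N%:Z.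

Definition ind (j t : int) : algC := (j == t)%:R.

Definition lam (i : int) : algC := q ^ (2 * i) + q ^ (- 2 * i).
Definition s_ (i : int) : algC :=
  (q ^ (2 * i - 2 * k) - q ^ (- 2 * i + 2 * k)) / (q ^ (2 * i) - q ^ (- 2 * i)).
Definition s'_ (i : int) : algC :=
  (q ^ (2 * i + 2) - q ^ (- 2 * i - 2)) / (q ^ (2 * i) - q ^ (- 2 * i)) * s_ i.
Definition beta (i : int) : algC :=
  (q ^ (2 * k) - q ^ (- 2 * k)) / (q ^ (2 * i) - q ^ (- 2 * i)) ^+ 3.

(* rho(alpha_0) u_i = sum_j (rhoA0 coefficient i j) u_j *)
Definition a0coef (i j : int) : algC :=
  if (i <= 0) then lam i * ind j i
  else lam i * ind j i + ind j (- i).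

(* rho(alpha_infty) u_i; u_N := 0 is automatic since j ranges over [-N, N-1] *)
Definition ainfcoef (i j : int) : algC :=
  if i == - N%:Z then
    (q ^ (2 * k) + q ^ (- 2 * k)) * ind j (- N%:Z + 1)
    + (q ^+ 2 - q ^- 2) * (q ^ (2 * k) - q ^ (- 2 * k)) * ind j (N%:Z - 1)
  else if i < 0 then s_ i * ind j (i + 1) + s_ (- i) * ind j (i - 1)
  else if i == 0 then
    (q ^ (2 * k) + q ^ (- 2 * k)) * ind j (-1)
    - (q ^+ 2 - q ^- 2) * (q ^ (2 * k) - q ^ (- 2 * k)) * ind j 1
  else beta i * ind j (- i - 1) - beta i * ind j (- i + 1)
       + s'_ (- i) * ind j (i - 1) + s'_ i * ind j (i + 1).

(* Matrices acting on row coordinate vectors: u_i *m M = rho(x) u_i. *)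
Definition rhoA0 : 'M[algC]_(N.*2) := \matrix_(i, j) a0coef (idx i) (idx j).
Definition rhoAinf : 'M[algC]_(N.*2) := \matrix_(i, j) ainfcoef (idx i) (idx j).

End Rho.

Definition wpar (q : algC) (k : int) : algC := - q ^ (4 * k + 2) - q ^ (- 4 * k - 2).

(* A representation of S_q(Sigma_{1,1}) (q^4 <> 1) on algC^m given by the images
   A, B of alpha_0, alpha_infty is reducible iff there is a nontrivial proper
   subspace (row space of U) stable under A and B. *)
Definition reducible2 (m : nat) (A B : 'M[algC]_m) : Prop :=
  exists U : 'M[algC]_m, [/\ stablemx U A, stablemx U B & (0 < \rank U < m)%N].

(* Main.v *)
Require Import Defs.
From HB Require Import structures.
From mathcomp Require Import all_boot all_order all_algebra all_field.
From mathcomp Require Import zify ring lra.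
Set Implicit Arguments. Unset Strict Implicit. Unset Printing Implicit Defensive.
Import Order.TTheory GRing.Theory Num.Theory.
Local Open Scope ring_scope.

Section Basis.
Variable N : nat.

Definition e (t : int) : 'rV[algC]_(N.*2) := \row_j ind (idx j) t.

Lemma idx_range (j : 'I_(N.*2)) : - (N%:Z) <= idx j < N%:Z.
Proof. rewrite /idx; have := ltn_ord j; lia. Qed.

Lemma idx_inj : injective (@idx N).
Proof. move=> i j; rewrite /idx => h; apply/val_inj => /=; lia. Qed.

Lemma idx_surj (t : int) : - (N%:Z) <= t < N%:Z -> exists j : 'I_(N.*2), idx j = t.
Proof.
move=> ht.
have hlt : (absz (t + N%:Z)%R < N.*2)%N by lia.
exists (Ordinal hlt); rewrite /idx /=; lia.
Qed.

Lemma ind_eq (a b : int) : ind a b = (a == b)%:R.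
Proof. by []. Qed.

Lemma e_out t : ~~ ((- (N%:Z) <= t) && (t < N%:Z)) -> e t = 0.
Proof.
move=> h; apply/rowP => j; rewrite !mxE ind_eq.
have := idx_range j; case: eqP => // ->; move: h; lia.
Qed.

Lemma e_neq0 t : - (N%:Z) <= t < N%:Z -> e t != 0.
Proof.
case/idx_surj => j hj; apply/eqP => /rowP /(_ j); rewrite !mxE ind_eq hj eqxx.
by move/eqP; rewrite oner_eq0.
Qed.

Lemma eM (f : int -> int -> algC) t : - (N%:Z) <= t < N%:Z ->
  e t *m (\matrix_(i, j) f (idx i) (idx j) : 'M_(N.*2)) = \row_j f t (idx j).
Proof.
case/idx_surj => i0 hi0; apply/rowP => j; rewrite !mxE (bigD1 i0) //= big1.
  by rewrite !mxE ind_eq hi0 eqxx mul1r addr0.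
move=> i hi; rewrite !mxE ind_eq -hi0.
by rewrite (inj_eq idx_inj) (negbTE hi) mul0r.
Qed.

Lemma e_idx (i : 'I_(N.*2)) : e (idx i) = delta_mx 0 i.
Proof.
apply/rowP => j; rewrite !mxE ind_eq (inj_eq idx_inj) /=.
by case: (j == i).
Qed.

End Basis.

Section Coefs.
Variables (q : algC) (k : int) (N : nat).
Hypothesis N0 : (0 < N)%N.

Local Notation e := (@e N).
Local Notation A0 := (rhoA0 q N).
Local Notation B := (rhoAinf q k N).
Definition cc := q ^ (2 * k) + q ^ (- 2 * k).
Definition dd := (q ^+ 2 - q ^- 2) * (q ^ (2 * k) - q ^ (- 2 * k)).

Lemma eA0 t : - (N%:Z) <= t < N%:Z ->
  e t *m A0 = lam q t *: e t + (if 0 < t then e (- t) else 0).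
Proof.
move=> ht; rewrite /rhoA0 eM //; apply/rowP => j; rewrite !mxE /a0coef.
case: ifP => h.
  have -> : (0 < t) = false by lia.
  by rewrite mxE addr0.
have -> : (0 < t) = true by lia.
by rewrite !mxE.
Qed.

Lemma eB_m : e (- (N%:Z)) *m B = cc *: e (- (N%:Z) + 1) + dd *: e (N%:Z - 1).
Proof.
rewrite /rhoAinf eM; last by lia.
by apply/rowP => j; rewrite !mxE /ainfcoef eqxx.
Qed.

Lemma eB_neg t : - (N%:Z) < t < 0 ->
  e t *m B = s_ q k t *: e (t + 1) + s_ q k (- t) *: e (t - 1).
Proof.
move=> ht; rewrite /rhoAinf eM; last by lia.
apply/rowP => j; rewrite !mxE /ainfcoef.
have -> : (t == - (N%:Z)) = false by lia.
by have -> : (t < 0) = true by lia.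
Qed.

Lemma eB_0 : e 0 *m B = cc *: e (-1) - dd *: e 1.
Proof.
rewrite /rhoAinf eM; last by lia.
apply/rowP => j; rewrite !mxE /ainfcoef.
have -> : ((0:int) == - (N%:Z)) = false by lia.
by rewrite ltxx eqxx.
Qed.

Lemma eB_pos t : 0 < t < N%:Z ->
  e t *m B = beta q k t *: e (- t - 1) - beta q k t *: e (- t + 1)
             + s'_ q k (- t) *: e (t - 1) + s'_ q k t *: e (t + 1).
Proof.
move=> ht; rewrite /rhoAinf eM; last by lia.
apply/rowP => j; rewrite !mxE /ainfcoef.
have -> : (t == - (N%:Z)) = false by lia.
have -> : (t < 0) = false by lia.
by have -> : (t == 0) = false by lia.
Qed.

End Coefs.

Section Num.
Variables (q : algC) (k : int) (N : nat).
Hypothesis prim : (N.*2).-primitive_root (q ^+ 2).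

Definition X (z : int) : algC := q ^ (2 * z).

Lemma N0 : (0 < N)%N.
Proof. have := prim_order_gt0 prim; lia. Qed.

Lemma q_neq0 : q != 0.
Proof.
apply/eqP => q0; have := prim_expr_order prim; rewrite -exprM q0 expr0n.
have -> : (2 * N.*2 == 0)%N = false by have := N0; lia.
by move/eqP; rewrite eq_sym oner_eq0.
Qed.

Lemma X_neq0 z : X z != 0.
Proof. exact: expfz_neq0 q_neq0. Qed.

Lemma XD a b : X (a + b) = X a * X b.
Proof. by rewrite /X mulrDr expfzDr // q_neq0. Qed.

Lemma XN a : X (- a) = (X a)^-1.
Proof. by rewrite /X invr_expz mulrN. Qed.

Lemma X_pow z : X z = (q ^+ 2) ^ z.
Proof. by rewrite /X -exprz_exp. Qed.

Lemma X_eq1 z : (X z == 1) = (N.*2%:Z %| z)%Z.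
Proof.
rewrite X_pow dvdzE /=; case: z => n /=.
  by rewrite -(prim_order_dvd prim).
by rewrite invr_eq1 -(prim_order_dvd prim).
Qed.

Lemma Xsub_eq0 a b : (X a - X b == 0) = (N.*2%:Z %| a - b)%Z.
Proof.
rewrite -X_eq1 subr_eq0.
have -> : X a = X (a - b) * X b by rewrite -XD subrK.
by rewrite -{2}[X b]mul1r (inj_eq (mulIf (X_neq0 b))).
Qed.

Lemma Xpm_eq0 a : (X a - X (- a) == 0) = (N%:Z %| a)%Z.
Proof.
rewrite Xsub_eq0 opprK.
have -> : a + a = 2 * a by rewrite mulr2n mulrDl mul1r.
have -> : N.*2%:Z = 2 * N%:Z by rewrite -muln2 PoszM mulrC.
by rewrite dvdz_mul2l.
Qed.

Lemma qN2 i : q ^ (- 2 * i) = X (- i).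
Proof. by rewrite /X mulrN mulNr. Qed.

Lemma s_X i : s_ q k i = (X (i - k) - X (- (i - k))) / (X i - X (- i)).
Proof.
rewrite /s_ /X; congr ((q ^ _ - q ^ _) / (q ^ _ - q ^ _)); lia.
Qed.

Lemma s'_X i : s'_ q k i = (X (i + 1) - X (- (i + 1))) / (X i - X (- i)) * s_ q k i.
Proof.
rewrite /s'_ /X; congr ((q ^ _ - q ^ _) / (q ^ _ - q ^ _) * _); lia.
Qed.

Lemma beta_X i : beta q k i = (X k - X (- k)) / (X i - X (- i)) ^+ 3.
Proof. by rewrite /beta /X; congr ((q ^ _ - q ^ _) / (q ^ _ - q ^ _) ^+ 3); lia. Qed.

Lemma lam_X i : lam q i = X i + X (- i).
Proof. by rewrite /lam /X; congr (q ^ _ + q ^ _); lia. Qed.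

Lemma dd_X : dd q k = (X 1 - X (- 1)) * (X k - X (- k)).
Proof.
rewrite /dd /X mulr1 mulrN1 -invr_expz.
by congr ((_ - _) * (q ^ _ - q ^ _)); lia.
Qed.

Lemma wpar_X : wpar q k = - X (2 * k + 1) - X (- (2 * k + 1)).
Proof. by rewrite /wpar /X; congr (- q ^ _ - q ^ _); lia. Qed.

Lemma s_neq0 i : ~~ (N%:Z %| i)%Z -> ~~ (N%:Z %| i - k)%Z -> s_ q k i != 0.
Proof.
rewrite -!Xpm_eq0 s_X => h1 h2.
by rewrite mulf_neq0 // invr_neq0.
Qed.

Lemma s_eq0 i : (N%:Z %| i - k)%Z -> s_ q k i = 0.
Proof. by rewrite -Xpm_eq0 s_X => /eqP ->; rewrite mul0r. Qed.

Lemma s'_neq0 i : ~~ (N%:Z %| i)%Z -> ~~ (N%:Z %| i + 1)%Z -> ~~ (N%:Z %| i - k)%Z ->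
  s'_ q k i != 0.
Proof.
move=> h1 h2 h3; rewrite s'_X mulf_neq0 ?s_neq0 //.
by rewrite -!Xpm_eq0 in h1 h2; rewrite mulf_neq0 // invr_neq0.
Qed.

Lemma s'_eq0 i : (N%:Z %| i - k)%Z -> s'_ q k i = 0.
Proof. by move=> h; rewrite s'_X s_eq0 // mulr0. Qed.

Lemma beta_neq0 i : ~~ (N%:Z %| i)%Z -> ~~ (N%:Z %| k)%Z -> beta q k i != 0.
Proof.
rewrite -!Xpm_eq0 beta_X => h1 h2.
by rewrite mulf_neq0 // invr_neq0 // expf_neq0.
Qed.

Lemma dd_neq0 : ~~ (N%:Z %| 1)%Z -> ~~ (N%:Z %| k)%Z -> dd q k != 0.
Proof. by rewrite -!Xpm_eq0 dd_X => h1 h2; rewrite mulf_neq0. Qed.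

Lemma dd_eq0 : (N%:Z %| k)%Z -> dd q k = 0.
Proof. by rewrite -!Xpm_eq0 dd_X => /eqP ->; rewrite mulr0. Qed.

Lemma lamN i : lam q (- i) = lam q i.
Proof. by rewrite !lam_X opprK addrC. Qed.

Lemma lam_sub a b : lam q a - lam q b = (X a - X b) * (1 - X (- a - b)).
Proof.
rewrite !lam_X XD !XN.
have := X_neq0 a; have := X_neq0 b; move: (X a) (X b) => y z hz hy.
by field; rewrite hz hy.
Qed.


Lemma dvd_gap (M z a : int) : 0 < M -> (M %| z)%Z -> a * M < z -> z < (a + 1) * M -> False.
Proof. move=> M0 /dvdzP [m ->]; rewrite !ltr_pM2r //. lia. Qed.

Lemma ndvd (M z a : int) : 0 < M -> a * M < z -> z < (a + 1) * M -> ~~ (M %| z)%Z.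
Proof. by move=> M0 h1 h2; apply/negP => h; apply: (dvd_gap M0 h h1 h2). Qed.

Lemma dvd_small (M z : int) : 0 < M -> - M < z -> z < M -> (M %| z)%Z -> z = 0.
Proof.
move=> M0 h1 h2 h; case: (ltrgtP z 0) => // hz; exfalso.
  by apply: (@dvd_gap M z (-1) M0 h); lia.
by apply: (@dvd_gap M z 0 M0 h); lia.
Qed.

Lemma lam_inj a b : - (N%:Z) <= a <= 0 -> - (N%:Z) <= b <= 0 -> lam q a = lam q b -> a = b.
Proof.
move=> ha hb /eqP; rewrite -subr_eq0 lam_sub mulf_eq0 Xsub_eq0 subr_eq0 eq_sym X_eq1.
have N0' := N0.
case/orP => h.
  apply/eqP; rewrite -subr_eq0; apply/eqP.
  apply: (@dvd_small (N.*2%:Z)); lia.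
have : - a - b = 0 \/ - a - b = N.*2%:Z.
  have [h1|h1] : - a - b < N.*2%:Z \/ - a - b = N.*2%:Z by lia.
    by left; apply: (@dvd_small (N.*2%:Z)); lia.
  by right.
lia.
Qed.

Lemma X_Nm1 : X N%:Z = -1.
Proof.
have h1 : X N%:Z ^+ 2 = 1.
  by apply/eqP; rewrite expr2 -XD X_eq1; apply/dvdzP; exists 1; lia.
have h2 : X N%:Z != 1.
  rewrite X_eq1; apply: (@ndvd _ _ 0); have := N0; lia.
have : (X N%:Z - 1) * (X N%:Z + 1) = 0.
  by rewrite mulrDr mulr1 mulrBl mul1r -expr2 h1; ring.
move/eqP; rewrite mulf_eq0 subr_eq0 (negbTE h2) /= addr_eq0 => /eqP //.
Qed.

Lemma wpar_eq2 : (wpar q k == 2) = (N.*2%:Z %| 2 * k + 1 - N%:Z)%Z.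
Proof.
rewrite -Xsub_eq0 X_Nm1 opprK wpar_X XN.
have := X_neq0 (2 * k + 1); move: (X _) => y hy.
have -> : - y - y^-1 = 2 + (- (y + 1) ^+ 2 / y) by field; rewrite hy.
rewrite -subr_eq0 addrAC subrr add0r mulf_eq0 invr_eq0 (negbTE hy) orbF oppr_eq0.
by rewrite expf_eq0.
Qed.

End Num.

Lemma subB_sub n m1 m2 (A B : 'M[algC]_(m1, n)) (U : 'M_(m2, n)) :
  (A <= U)%MS -> (B <= U)%MS -> ((A - B)%R <= U)%MS.
Proof. by move=> hA hB; rewrite -scaleN1r addmx_sub // scalemx_sub. Qed.

Lemma unscale_sub n m2 (a : algC) (A : 'rV_n) (U : 'M_(m2, n)) :
  a != 0 -> (a *: A <= U)%MS -> (A <= U)%MS.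
Proof. by move=> ha h; rewrite -[A](scalerK ha) scalemx_sub. Qed.

Lemma extract n m2 (a : algC) (A W : 'rV_n) (U : 'M_(m2, n)) :
  a != 0 -> ((a *: A + W)%R <= U)%MS -> (W <= U)%MS -> (A <= U)%MS.
Proof.
move=> ha h hW; apply: (unscale_sub ha).
have -> : a *: A = (a *: A + W) - W by rewrite addrK.
exact: (subB_sub h hW).
Qed.

Lemma stab_sub n m2 (v : 'rV[algC]_n) (U : 'M_(m2, n)) M :
  stablemx U M -> (v <= U)%MS -> (v *m M <= U)%MS.
Proof. by move=> sM hv; apply: submx_trans sM; rewrite submxMr. Qed.

Section Main.
Variables (q : algC) (k : int) (N : nat).
Hypothesis prim : (N.*2).-primitive_root (q ^+ 2).

Local Notation e := (@e N).
Local Notation A0 := (rhoA0 q N).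
Local Notation B := (rhoAinf q k N).
Local Notation Nz := (N%:Z).

Lemma e_out_sub (U : 'M_(N.*2)) t : ~~ ((- Nz <= t) && (t < Nz)) -> (e t <= U)%MS.
Proof. by move=> h; rewrite e_out // sub0mx. Qed.

Lemma lower_sep (U : 'M_(N.*2)) a b al be :
  stablemx U A0 -> - Nz <= a <= 0 -> - Nz <= b <= 0 -> a != b -> al != 0 ->
  ((al *: e a + be *: e b)%R <= U)%MS -> (e a <= U)%MS.
Proof.
move=> sA ha hb hab hal hv.
have hl : lam q a - lam q b != 0.
  rewrite subr_eq0; apply/eqP => h; move/eqP: hab; apply.
  exact: (lam_inj prim).
have h1 : (al *: e a + be *: e b) *m A0 - lam q b *: (al *: e a + be *: e b)
          = (al * (lam q a - lam q b)) *: e a.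
  rewrite mulmxDl -!scalemxAl !eA0; try lia.
  have -> : (0 < a) = false by lia.
  have -> : (0 < b) = false by lia.
  by apply/rowP => j; rewrite !mxE; ring.
apply: (unscale_sub (mulf_neq0 hal hl)); rewrite -h1; apply: subB_sub.
  exact: stab_sub.
exact: scalemx_sub.
Qed.

Lemma pair_sep (U : 'M_(N.*2)) p al be :
  stablemx U A0 -> 0 < p < Nz -> be != 0 ->
  ((al *: e (- p) + be *: e p)%R <= U)%MS -> (e (- p) <= U)%MS.
Proof.
move=> sA hp hbe hv.
have h1 : (al *: e (- p) + be *: e p) *m A0 - lam q p *: (al *: e (- p) + be *: e p)
          = be *: e (- p).
  rewrite mulmxDl -!scalemxAl !eA0; try lia.
  have -> : (0 < - p) = false by lia.
  have -> : (0 < p) = true by lia.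
  rewrite (lamN prim).
  by apply/rowP => j; rewrite !mxE; ring.
apply: (unscale_sub hbe); rewrite -h1; apply: subB_sub.
  exact: stab_sub.
exact: scalemx_sub.
Qed.

End Main.

Section Red.
Variables (q : algC) (k : int) (N : nat).
Hypothesis prim : (N.*2).-primitive_root (q ^+ 2).

Local Notation e := (@e N).
Local Notation A0 := (rhoA0 q N).
Local Notation B := (rhoAinf q k N).
Local Notation Nz := (N%:Z).

Definition Ud (P : int -> bool) : 'M[algC]_(N.*2) := diag_mx (\row_i (P (idx i))%:R).

Lemma row_Ud (P : int -> bool) i : row i (Ud P) = if P (idx i) then e (idx i) else 0.
Proof.
apply/rowP => j; rewrite !mxE.
case: (P (idx i)); rewrite ?mxE ?mul0rn // ind_eq (inj_eq (@idx_inj N)) eq_sym.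
by case: (i == j).
Qed.

Lemma Ud_e (P : int -> bool) t : P t -> (e t <= Ud P)%MS.
Proof.
move=> hP; case: (boolP ((- Nz <= t) && (t < Nz))) => ht; last first.
  by rewrite e_out // sub0mx.
case/idx_surj: ht => i hi; apply/(eq_row_sub i); rewrite row_Ud hi hP //.
Qed.

Lemma term (P : int -> bool) a s : a = 0 \/ P s -> (a *: e s <= Ud P)%MS.
Proof.
by case=> [->|h]; [rewrite scale0r sub0mx | rewrite scalemx_sub // Ud_e].
Qed.

Lemma Ud_stable (P : int -> bool) M : (forall t, - Nz <= t < Nz -> P t -> (e t *m M <= Ud P)%MS) ->
  stablemx (Ud P) M.
Proof.
move=> h; apply/row_subP => i; rewrite row_mul row_Ud.
case: ifP => hP; last by rewrite mul0mx sub0mx.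
by apply: h => //; apply: idx_range.
Qed.

Lemma Ud_rank (P : int -> bool) t1 t2 : - Nz <= t1 < Nz -> P t1 -> - Nz <= t2 < Nz -> ~~ P t2 ->
  (0 < \rank (Ud P) < N.*2)%N.
Proof.
move=> h1 hP1 h2 hP2; apply/andP; split.
  have := mxrankS (Ud_e hP1); rewrite rank_rV e_neq0 //.
rewrite ltn_neqAle rank_leq_row andbT; apply/negP => /eqP hr.
have : row_free (Ud P) by rewrite /row_free hr.
case/idx_surj: h2 => i hi.
rewrite row_free_unit unitmxE det_diag unitfE (bigD1 i) //= !mxE hi (negbTE hP2).
by rewrite mul0r eqxx.
Qed.

Lemma dvd_shift r i : (Nz %| k - r)%Z -> (Nz %| i - k)%Z = (Nz %| i - r)%Z.
Proof.
move=> h; apply/idP/idP => h'.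
  have -> : i - r = (i - k) + (k - r) by ring.
  by rewrite rpredD.
have -> : i - k = (i - r) - (k - r) by ring.
by rewrite rpredB.
Qed.

Lemma dvdNz : (Nz %| - Nz)%Z.
Proof. by apply/dvdzP; exists (-1); ring. Qed.

Lemma red_caseA r : 0 <= r < Nz -> (Nz %| k - r)%Z -> Nz < 2 * r + 1 ->
  reducible2 A0 B.
Proof.
move=> hr hk hN; have N0' := N0 prim.
pose P t := (- r <= t) && (t <= - (Nz - r)).
exists (Ud P); split.
- apply: Ud_stable => t ht hP; rewrite eA0 //.
  have -> : (0 < t) = false by move: hP; rewrite /P; lia.
  by rewrite addr0 scalemx_sub // Ud_e.
- apply: Ud_stable => t ht hP; rewrite (eB_neg q k N0'); last by move: hP; rewrite /P; lia.
  apply: addmx_sub; apply: term.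
    have [->|hne] := eqVneq t (- (Nz - r)).
      left; apply: (s_eq0 prim); rewrite (dvd_shift _ hk).
      have -> : - (Nz - r) - r = - Nz by ring.
      by apply: dvdNz.
    by right; move: hP hne; rewrite /P; lia.
  have [->|hne] := eqVneq t (- r).
    by left; apply: (s_eq0 prim); rewrite (dvd_shift _ hk) opprK subrr dvdz0.
  by right; move: hP hne; rewrite /P; lia.
- apply: (@Ud_rank P (- r) 0); rewrite /P; lia.
Qed.

Lemma red_caseB r : 0 <= r < Nz -> (Nz %| k - r)%Z -> 2 * r + 1 < Nz ->
  reducible2 A0 B.
Proof.
move=> hr hk hN; have N0' := N0 prim.
pose P t := (t <= 0) || ((1 <= t) && (t <= r)) || (Nz - r <= t).
have Pl t : t <= 0 -> P t by rewrite /P; lia.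
exists (Ud P); split.
- apply: Ud_stable => t ht hP; rewrite eA0 //.
  apply: addmx_sub; first by rewrite scalemx_sub // Ud_e.
  case: ifP => h0; last by rewrite sub0mx.
  by apply: Ud_e; apply: Pl; lia.
- apply: Ud_stable => t ht hP.
  have [->|htN] := eqVneq t (- Nz).
    rewrite eB_m //; apply: addmx_sub; apply: term; first by right; apply: Pl; lia.
    have [r0|r0] := eqVneq r 0.
      by left; apply: (dd_eq0 prim); move: hk; rewrite r0 subr0.
    by right; rewrite /P; lia.
  have [ht0|ht0] := ltrP t 0.
    rewrite (eB_neg q k N0'); last by lia.
    by apply: addmx_sub; apply: term; right; apply: Pl; lia.
  have [->|ht0'] := eqVneq t 0.
    rewrite eB_0 //; apply: subB_sub; apply: term; first by right; apply: Pl; lia.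
    have [r0|r0] := eqVneq r 0.
      by left; apply: (dd_eq0 prim); move: hk; rewrite r0 subr0.
    by right; rewrite /P; lia.
  rewrite (eB_pos q k N0'); last by lia.
  apply: addmx_sub; [apply: addmx_sub; [apply: subB_sub|] | ].
  + by apply: term; right; apply: Pl; lia.
  + by apply: term; right; apply: Pl; lia.
  + apply: term.
    have [ht1|ht1] := eqVneq t 1; first by right; apply: Pl; lia.
    have [htr|htr] := eqVneq t (Nz - r).
      left; apply: (s'_eq0 prim); rewrite (dvd_shift _ hk).
      have -> : - t - r = - Nz by rewrite htr; ring.
      by apply: dvdNz.
    by right; move: hP ht1 htr; rewrite /P; lia.
  + apply: term.
    have [htr|htr] := eqVneq t r.
      by left; apply: (s'_eq0 prim); rewrite (dvd_shift _ hk) htr subrr dvdz0.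
    by right; move: hP htr; rewrite /P; lia.
- apply: (@Ud_rank P 0 (r + 1)); rewrite /P; lia.
Qed.

End Red.

Section Irr.
Variables (q : algC) (k : int) (N : nat).
Hypothesis prim : (N.*2).-primitive_root (q ^+ 2).

Local Notation e := (@e N).
Local Notation A0 := (rhoA0 q N).
Local Notation B := (rhoAinf q k N).
Local Notation Nz := (N%:Z).

Lemma eig_exists (U : 'M[algC]_(N.*2)) : stablemx U A0 -> (0 < \rank U)%N ->
  exists v : 'rV_(N.*2), exists a, [/\ v != 0, (v <= U)%MS & v *m A0 = a *: v].
Proof.
move=> sA hr.
pose f := restrictmx U A0.
have [a ha] : exists a, root (char_poly f) a.
  by apply/closed_rootP; rewrite size_char_poly; case: (\rank U) hr.
have : eigenvalue f a by rewrite eigenvalue_root_char.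
case/eigenvalueP => y hy hy0.
exists (y *m row_base U), a; split.
- by rewrite mulmx_free_eq0 ?row_base_free.
- by rewrite -(eq_row_base U) submxMl.
- apply/eigenspaceP; rewrite -sub_eigenspace_conjmx ?row_base_free //.
    by apply/eigenspaceP.
  by rewrite stablemx_row_base.
Qed.

Lemma a0_term (v : algC) (i j : 'I_(N.*2)) :
  v * a0coef q (idx i) (idx j) =
  (if i == j then lam q (idx j) * v else 0)
  + (if (idx j < 0) && (idx i == - idx j) then v else 0).
Proof.
rewrite -(inj_eq (@idx_inj N)) /a0coef !ind_eq.
move: (idx i) (idx j) => x y.
have [->|hyx] := eqVneq y x.
  rewrite /= mulr1n mulr1.
  have -> : (x < 0) && (x == - x) = false by lia.
  rewrite addr0; case: ifP => hx; first by ring.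
  have -> : (x == - x) = false by lia.
  by rewrite mulr0n addr0; ring.
rewrite /= mulr0n mulr0 add0r.
case: ifP => hx.
  have -> : (y < 0) && (x == - y) = false by lia.
  by rewrite mulr0 addr0.
have -> : (y == - x) = (y < 0) && (x == - y) by lia.
by rewrite add0r; case: ifP; rewrite ?mulr1n ?mulr0n ?mulr1 ?mulr0.
Qed.

Lemma vA0_coord (v : 'rV_(N.*2)) j :
  (v *m A0) 0 j = lam q (idx j) * v 0 j
    + \sum_i (if (idx j < 0) && (idx i == - idx j) then v 0 i else 0).
Proof.
rewrite mxE; under eq_bigr do rewrite /rhoA0 mxE a0_term.
rewrite big_split /= -big_mkcond /= big_pred1_eq //.
Qed.

Lemma eig_basis (v : 'rV_(N.*2)) a : v != 0 -> v *m A0 = a *: v ->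
  exists t, (- Nz <= t <= 0) /\ exists c, c != 0 /\ v = c *: e t.
Proof.
move=> hv hA.
pose S (j : 'I_(N.*2)) := \sum_i (if (idx j < 0) && (idx i == - idx j) then v 0 i else 0).
have Eq j : lam q (idx j) * v 0 j + S j = a * v 0 j.
  by rewrite /S -vA0_coord hA mxE.
have C1 j : 0 < idx j -> v 0 j = 0.
  move=> hj; apply/eqP; apply/negPn/negP => hvj.
  have hSj : S j = 0.
    by apply: big1 => i _; have -> : (idx j < 0) = false by lia.
  have hla : lam q (idx j) = a.
    by apply: (mulIf hvj); have := Eq j; rewrite hSj addr0.
  have [j' hj'] : exists j' : 'I_(N.*2), idx j' = - idx j.
    by apply: idx_surj; have := idx_range j; lia.
  have hSj' : S j' = v 0 j.
    rewrite /S (bigD1 j) //= big1.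
      rewrite hj' opprK eqxx andbT.
      have -> : (- idx j < 0) = true by lia.
      by rewrite addr0.
    by move=> i hi; rewrite hj' opprK (inj_eq (@idx_inj N)) (negbTE hi) andbF.
  have := Eq j'; rewrite hSj' hj' (lamN prim) hla.
  by move/eqP; rewrite -[Y in _ == Y]addr0 (inj_eq (addrI _)) (negbTE hvj).
have S0 j : S j = 0.
  apply: big1 => i _; case: ifP => // /andP [h1 /eqP h2]; apply: C1; lia.
have [j0 hj0] : exists j, v 0 j != 0.
  apply/existsP; apply/negP => /existsP h; move/negP: hv; apply.
  apply/eqP/rowP => j; rewrite mxE; apply/eqP/negPn/negP => hj; apply: h; by exists j.
have hj0le : idx j0 <= 0.
  by rewrite leNgt; apply/negP => h; move: hj0; rewrite C1 // eqxx.
have ha : a = lam q (idx j0).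
  by apply: (mulIf hj0); have := Eq j0; rewrite S0 addr0.
exists (idx j0); split; first by have := idx_range j0; lia.
exists (v 0 j0); split => //.
apply/rowP => j; rewrite !mxE ind_eq (inj_eq (@idx_inj N)).
have [->|hne] := eqVneq j j0; first by rewrite /= mulr1n mulr1.
rewrite mulr0.
have [hp|hp] := ltrP 0 (idx j); first exact: C1.
have h1 : (lam q (idx j) - lam q (idx j0)) * v 0 j = 0.
  by rewrite mulrBl; apply/eqP; rewrite subr_eq0; apply/eqP; have := Eq j; rewrite S0 addr0 ha.
move/eqP: h1; rewrite mulf_eq0 => /orP [|/eqP //].
rewrite subr_eq0 => /eqP h.
exfalso; move/eqP: hne; apply; apply: (@idx_inj N).
apply: (lam_inj prim) => //; have := idx_range j; have := idx_range j0; lia.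
Qed.

Lemma int_up (P : int -> Prop) (lo hi : int) :
  (forall t, lo <= t < hi -> P t -> P (t + 1)) ->
  forall t0, lo <= t0 <= hi -> P t0 -> P hi.
Proof.
move=> hs t0 ht0.
have [n hn] : exists n : nat, hi - t0 = n%:Z by exists (absz (hi - t0)); lia.
elim: n t0 ht0 hn => [|n IH] t0 ht0 hn hP.
  by have -> : hi = t0 by lia.
apply: (IH (t0 + 1)); [lia | lia | apply: hs => //; lia].
Qed.

Lemma int_down (P : int -> Prop) (lo hi : int) :
  (forall t, lo < t <= hi -> P t -> P (t - 1)) ->
  forall t0, lo <= t0 <= hi -> P t0 -> P lo.
Proof.
move=> hs t0 ht0.
have [n hn] : exists n : nat, t0 - lo = n%:Z by exists (absz (t0 - lo)); lia.
elim: n t0 ht0 hn => [|n IH] t0 ht0 hn hP.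
  by have -> : lo = t0 by lia.
apply: (IH (t0 - 1)); [lia | lia | apply: hs => //; lia].
Qed.

Lemma all_up (P : int -> Prop) (lo hi : int) :
  (forall t, lo <= t < hi -> P t -> P (t + 1)) -> P lo ->
  forall t, lo <= t <= hi -> P t.
Proof.
move=> hs hl t ht; apply: (@int_up P lo t _ lo) => //; last by lia.
by move=> s hs'; apply: hs; lia.
Qed.

Lemma all_down (P : int -> Prop) (lo hi : int) :
  (forall t, lo < t <= hi -> P t -> P (t - 1)) -> P hi ->
  forall t, lo <= t <= hi -> P t.
Proof.
move=> hs hh t ht; apply: (@int_down P t hi _ hi) => //; last by lia.
by move=> s hs'; apply: hs; lia.
Qed.

Lemma extract2 n m2 (a : algC) (A v : 'rV_n) (U : 'M_(m2, n)) :
  a != 0 -> (v <= U)%MS -> ((v - a *: A)%R <= U)%MS -> (A <= U)%MS.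
Proof.
move=> ha hv hW; apply: (unscale_sub ha).
have -> : a *: A = v - (v - a *: A) by rewrite opprB addrC subrK.
exact: subB_sub.
Qed.

Ltac clos := repeat first [apply: subB_sub | apply: addmx_sub | apply: scalemx_sub].

Section Gen.
Variables (U : 'M[algC]_(N.*2)) (r : int).
Hypotheses (sA : stablemx U A0) (sB : stablemx U B).
Hypotheses (hNr : Nz = 2 * r + 1) (hr1 : 1 <= r) (hk : (Nz %| k - r)%Z).

Local Notation In t := (e t <= U)%MS.

Lemma N0g : (0 < N)%N. Proof. exact: N0 prim. Qed.

Lemma Nzpos : 0 < Nz. Proof. lia. Qed.

Lemma nd z a : a * Nz < z -> z < (a + 1) * Nz -> ~~ (Nz %| z)%Z.
Proof. move=> h1 h2; exact: (ndvd prim Nzpos h1 h2). Qed.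

Lemma hkN : ~~ (Nz %| k)%Z.
Proof.
apply/negP => h.
have : (Nz %| k - (k - r))%Z by rewrite rpredB.
have -> : k - (k - r) = r by ring.
by apply/negP; apply: (@nd r 0); lia.
Qed.

Lemma sNZ i : ~~ (Nz %| i)%Z -> ~~ (Nz %| i - r)%Z -> s_ q k i != 0.
Proof. by move=> h1 h2; apply: (s_neq0 prim) => //; rewrite (dvd_shift _ hk). Qed.

Lemma s'NZ i : ~~ (Nz %| i)%Z -> ~~ (Nz %| i + 1)%Z -> ~~ (Nz %| i - r)%Z -> s'_ q k i != 0.
Proof. by move=> h1 h2 h3; apply: (s'_neq0 prim) => //; rewrite (dvd_shift _ hk). Qed.

Lemma s'Z i : (Nz %| i - r)%Z -> s'_ q k i = 0.
Proof. by move=> h; apply: (s'_eq0 prim); rewrite (dvd_shift _ hk). Qed.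

Lemma betaNZ i : ~~ (Nz %| i)%Z -> beta q k i != 0.
Proof. by move=> h; apply: (beta_neq0 prim) => //; apply: hkN. Qed.

Lemma ddNZ : dd q k != 0.
Proof. by apply: (dd_neq0 prim); [apply: (@nd 1 0); lia | apply: hkN]. Qed.

Lemma InB t : In t -> (e t *m B <= U)%MS.
Proof. exact: stab_sub. Qed.


Lemma up1 t : - r <= t <= -1 -> In t -> In (t + 1).
Proof.
move=> ht hI; have hv := InB hI; rewrite (eB_neg q k N0g) in hv; last by lia.
apply: (lower_sep prim sA _ _ _ _ hv); try lia.
by apply: sNZ; [apply: (@nd _ (-1)) | apply: (@nd _ (-1))]; lia.
Qed.

Lemma down1 t : - r + 1 <= t <= 0 -> In t -> In (t - 1).
Proof.
move=> ht hI; have hv := InB hI.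
have [t0|t0] := eqVneq t 0.
  rewrite t0 sub0r; rewrite t0 (eB_0 q k N0g) -scaleNr in hv.
  apply: (pair_sep prim sA _ _ hv); first by lia.
  by rewrite oppr_eq0 ddNZ.
rewrite (eB_neg q k N0g) in hv; last by lia.
rewrite addrC in hv.
apply: (lower_sep prim sA _ _ _ _ hv); try lia.
by apply: sNZ; [apply: (@nd _ 0) | apply: (@nd _ (-1))]; lia.
Qed.

Lemma B1all t0 : - r <= t0 <= 0 -> In t0 -> forall t, - r <= t <= 0 -> In t.
Proof.
move=> h0 hI.
have I0 : In 0.
  apply: (@int_up (fun t => In t) (- r) 0 _ t0 h0 hI).
  by move=> t ht; apply: up1; lia.
apply: (@all_down (fun t => In t) (- r) 0) => // t ht.
by apply: down1; lia.
Qed.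

Lemma down2 t : - Nz + 1 <= t <= - r - 1 -> In t -> In (t - 1).
Proof.
move=> ht hI; have hv := InB hI.
rewrite (eB_neg q k N0g) in hv; last by lia.
rewrite addrC in hv.
apply: (lower_sep prim sA _ _ _ _ hv); try lia.
by apply: sNZ; [apply: (@nd _ 0) | apply: (@nd _ 0)]; lia.
Qed.

Lemma up2 t : - Nz <= t <= - r - 2 -> In t -> In (t + 1).
Proof.
move=> ht hI; have hv := InB hI.
have [tN|tN] := eqVneq t (- Nz).
  rewrite tN; rewrite tN (eB_m q k N0g) in hv.
  have e1 : - Nz + 1 = - (Nz - 1) by ring.
  rewrite e1; rewrite e1 in hv.
  by apply: (pair_sep prim sA _ ddNZ hv); lia.
rewrite (eB_neg q k N0g) in hv; last by lia.
apply: (lower_sep prim sA _ _ _ _ hv); try lia.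
by apply: sNZ; [apply: (@nd _ (-1)) | apply: (@nd _ (-2))]; lia.
Qed.

Lemma B2all t0 : - Nz <= t0 <= - r - 1 -> In t0 -> forall t, - Nz <= t <= - r - 1 -> In t.
Proof.
move=> h0 hI.
have IN : In (- Nz).
  apply: (@int_down (fun t => In t) (- Nz) (- r - 1) _ t0 h0 hI).
  by move=> t ht; apply: down2; lia.
apply: (@all_up (fun t => In t) (- Nz) (- r - 1)) => // t ht.
by apply: up2; lia.
Qed.

Lemma cross12 : (forall t, - r <= t <= 0 -> In t) ->
  (forall t, 1 <= t <= r -> In t) /\ In (- r - 1).
Proof.
move=> hB1.
have I1 : In 1.
  have hv := InB (hB1 0 ltac:(lia)); rewrite (eB_0 q k N0g) in hv.
  apply: (extract2 (a := - dd q k) _ hv); first by rewrite oppr_eq0 ddNZ.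
  have -> : (cc q k *: e (-1) - dd q k *: e 1 - (- dd q k) *: e 1)%R = cc q k *: e (-1).
    by apply/rowP => j; rewrite !mxE; ring.
  by apply: scalemx_sub; apply: (hB1 (-1)); lia.
have step : forall t, 1 <= t < r -> (In t /\ In (t - 1)) -> (In (t + 1) /\ In (t + 1 - 1)).
  move=> t ht [hI hI']; split; last by rewrite addrK.
  have hv := InB hI; rewrite (eB_pos q k N0g) in hv; last by lia.
  apply: (extract2 (a := s'_ q k t) _ hv).
    by apply: s'NZ; [apply: (@nd _ 0) | apply: (@nd _ 0) | apply: (@nd _ (-1))]; lia.
  have -> : (beta q k t *: e (- t - 1) - beta q k t *: e (- t + 1) + s'_ q k (- t) *: e (t - 1)
     + s'_ q k t *: e (t + 1) - s'_ q k t *: e (t + 1))%R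
     = (beta q k t *: e (- t - 1) - beta q k t *: e (- t + 1) + s'_ q k (- t) *: e (t - 1))%R.
    by apply/rowP => j; rewrite !mxE; ring.
  by clos; [apply: (hB1 (- t - 1)); lia | apply: (hB1 (- t + 1)); lia | exact: hI'].
have hall : forall t, 1 <= t <= r -> In t /\ In (t - 1).
  apply: (@all_up (fun t => In t /\ In (t - 1)) 1 r) => //.
  by split => //; rewrite subrr; apply: (hB1 0); lia.
split; first by move=> t ht; case: (hall t ht).
have [hIr hIr'] := hall r ltac:(lia).
have hv := InB hIr; rewrite (eB_pos q k N0g) in hv; last by lia.
apply: (extract2 (a := beta q k r) _ hv).
  by apply: betaNZ; apply: (@nd _ 0); lia.
rewrite (@s'Z r); last by rewrite subrr dvdz0.
have -> : (beta q k r *: e (- r - 1) - beta q k r *: e (- r + 1) + s'_ q k (- r) *: e (r - 1)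
     + 0 *: e (r + 1) - beta q k r *: e (- r - 1))%R
     = (s'_ q k (- r) *: e (r - 1) - beta q k r *: e (- r + 1))%R.
  by apply/rowP => j; rewrite !mxE; ring.
by clos; [exact: hIr' | apply: (hB1 (- r + 1)); lia].
Qed.

Lemma cross21 : (forall t, - Nz <= t <= - r - 1 -> In t) ->
  (forall t, r + 1 <= t <= Nz - 1 -> In t) /\ In (- r).
Proof.
move=> hB2.
have IN1 : In (Nz - 1).
  have hv := InB (hB2 (- Nz) ltac:(lia)); rewrite (eB_m q k N0g) in hv.
  apply: (extract2 (a := dd q k) _ hv); first by apply: ddNZ.
  rewrite addrK; apply: scalemx_sub; apply: (hB2 (- Nz + 1)); lia.
have step : forall t, r + 1 < t <= Nz - 1 -> (In t /\ In (t + 1)) -> (In (t - 1) /\ In (t - 1 + 1)).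
  move=> t ht [hI hI']; split; last by rewrite subrK.
  have hv := InB hI; rewrite (eB_pos q k N0g) in hv; last by lia.
  apply: (extract2 (a := s'_ q k (- t)) _ hv).
    by apply: s'NZ; [apply: (@nd _ (-1)) | apply: (@nd _ (-1)) | apply: (@nd _ (-2))]; lia.
  have -> : (beta q k t *: e (- t - 1) - beta q k t *: e (- t + 1) + s'_ q k (- t) *: e (t - 1)
     + s'_ q k t *: e (t + 1) - s'_ q k (- t) *: e (t - 1))%R
     = (beta q k t *: e (- t - 1) - beta q k t *: e (- t + 1) + s'_ q k t *: e (t + 1))%R.
    by apply/rowP => j; rewrite !mxE; ring.
  by clos; [apply: (hB2 (- t - 1)); lia | apply: (hB2 (- t + 1)); lia | exact: hI'].
have hall : forall t, r + 1 <= t <= Nz - 1 -> In t /\ In (t + 1).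
  apply: (@all_down (fun t => In t /\ In (t + 1)) (r + 1) (Nz - 1)) => //.
  by split => //; rewrite subrK; apply: e_out_sub; lia.
split; first by move=> t ht; case: (hall t ht).
have [hIr hIr'] := hall (r + 1) ltac:(lia).
have hv := InB hIr; rewrite (eB_pos q k N0g) in hv; last by lia.
have e1 : - (r + 1) + 1 = - r by ring.
rewrite e1 in hv.
apply: (extract2 (a := - beta q k (r + 1)) _ hv).
  by rewrite oppr_eq0; apply: betaNZ; apply: (@nd _ 0); lia.
rewrite (@s'Z (- (r + 1))); last first.
  have -> : - (r + 1) - r = - Nz by lia.
  by apply: dvdNz.
have -> : (beta q k (r + 1) *: e (- (r + 1) - 1) - beta q k (r + 1) *: e (- r)
     + 0 *: e (r + 1 - 1) + s'_ q k (r + 1) *: e (r + 1 + 1)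
     - (- beta q k (r + 1)) *: e (- r))%R
     = (beta q k (r + 1) *: e (- (r + 1) - 1) + s'_ q k (r + 1) *: e (r + 1 + 1))%R.
  by apply/rowP => j; rewrite !mxE; ring.
by clos; [apply: (hB2 (- (r + 1) - 1)); lia | exact: hIr'].
Qed.

Lemma all_in t0 : - Nz <= t0 <= 0 -> In t0 -> forall t, - Nz <= t < Nz -> In t.
Proof.
move=> h0 hI.
have [H1 H2] : (forall t, - r <= t <= 0 -> In t) /\ (forall t, - Nz <= t <= - r - 1 -> In t).
  have [hl|hl] := lerP (- r) t0.
    have b1 := B1all (t0 := t0) ltac:(lia) hI.
    split => //; have [_ hr'] := cross12 b1.
    exact: (B2all (t0 := - r - 1) ltac:(lia) hr').
  have b2 := B2all (t0 := t0) ltac:(lia) hI.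
  split => //; have [_ hr'] := cross21 b2.
  exact: (B1all (t0 := - r) ltac:(lia) hr').
have [C1 _] := cross12 H1.
have [C2 _] := cross21 H2.
move=> t ht.
have [h|h] := lerP t (- r - 1); first by apply: H2; lia.
have [h'|h'] := lerP t 0; first by apply: H1; lia.
have [h''|h''] := lerP t r; first by apply: C1; lia.
by apply: C2; lia.
Qed.

End Gen.

Lemma irred r : Nz = 2 * r + 1 -> 1 <= r -> (Nz %| k - r)%Z -> ~ reducible2 A0 B.
Proof.
move=> hNr hr1 hk [U [sA sB /andP [h0 h1]]].
have [v [a [hv0 hvU hvA]]] := eig_exists sA h0.
have [t0 [ht0 [c [hc hvc]]]] := eig_basis hv0 hvA.
have hI0 : (e t0 <= U)%MS by apply: (unscale_sub hc); rewrite -hvc.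
have hall := all_in sA sB hNr hr1 hk ht0 hI0.
have : (1%:M <= U)%MS.
  apply/row_subP => i; rewrite row1 -e_idx; apply: hall; have := idx_range i; lia.
move/mxrankS; rewrite mxrank1 => h.
by move: h1; rewrite ltnNge h.
Qed.

End Irr.

Lemma wpar_r (q : algC) (k : int) (N : nat) : (N.*2).-primitive_root (q ^+ 2) ->
  (wpar q k == 2) = (2 * (k %% N%:Z)%Z + 1 == N%:Z).
Proof.
move=> prim; have N0' := N0 prim.
rewrite (wpar_eq2 k prim).
have E : 2 * k + 1 - N%:Z = (2 * (k %% N%:Z)%Z + 1 - N%:Z) + (k %/ N%:Z)%Z * N.*2%:Z.
  have -> : N.*2%:Z = 2 * N%:Z by rewrite -muln2 PoszM mulrC.
  have := divz_eq k N%:Z; lia.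
rewrite E rpredDr; last by apply: dvdz_mull; apply: dvdzz.
apply/idP/eqP => h.
  apply/eqP; rewrite -subr_eq0; apply/eqP.
  apply: (dvd_small prim (M := N.*2%:Z)) => //; lia.
by rewrite h subrr dvdz0.
Qed.

Unset Implicit Arguments.

Theorem mainTheorem14 (q : algC) (n : nat) (k : int) :
  n.-primitive_root (q ^+ 2) -> ~~ odd n -> q ^+ 4 != 1 ->
  (reducible2 (rhoA0 q (n./2)) (rhoAinf q k (n./2)) <-> wpar q k != 2).
Proof.
move=> prim0 hodd q4.
have hn : n = (n./2).*2 by rewrite -{1}(odd_double_half n) (negbTE hodd) add0n.
rewrite hn in prim0; move: prim0; set N := n./2 => prim0.
have N0' := N0 prim0.
have N2 : (2 <= N)%N.
  rewrite leqNgt; apply/negP => hN1.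
  have N1 : N = 1%N by lia.
  move: prim0; rewrite N1 => /prim_expr_order; rewrite -exprM.
  by have -> : (2 * 1.*2 = 4)%N by []; move=> h4; move: q4; rewrite h4 eqxx.
set r := (k %% N%:Z)%Z.
have hr : 0 <= r < N%:Z by rewrite /r; lia.
have hk : (N%:Z %| k - r)%Z.
  apply/dvdzP; exists (k %/ N%:Z)%Z; rewrite /r; have := divz_eq k N%:Z; lia.
rewrite (wpar_r k prim0) -/r.
split.
  move=> hred; apply/negP => /eqP h.
  by apply: (irred (k := k) prim0 (r := r) _ _ _ hred); lia.
move=> hw.
have [h|h|h] := ltrgtP (2 * r + 1) N%:Z.
- exact: (red_caseB prim0 hr hk h).
- exact: (red_caseA prim0 hr hk h).
- by rewrite h eqxx in hw.
Qed.
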